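(* Let $\ell\ge1$, $n\ge2$, $N=n^\ell$, $T=\ell(n-1)$, and consider the EBS connection schedule of order $\ell$. For every physical edge $e$ of its virtual topology, the number of triples $(t,a,b)\in\mathbb Z\times(\mathbb Z/n)^\ell\times(\mathbb Z/n)^\ell$ such that the EBS semi-path from $(a,t)$ to $b$ traverses $e$ is exactly $T\,n^{\ell-1}$.
   Context: The virtual topology of a connection schedule $(\pi_t)_{t\in\mathbb Z}$ (periodic with period $T$) is the directed graph on (nodes)$\times\mathbb Z$ with virtual edges $(i,t)\to(i,t+1)$ and physical edges $(i,t)\to(\pi_t(i),t+1)$. EBS connection schedule of order $\ell$: nodes are $(\mathbb Z/n)^\ell$; $\mathbf e_p$ ($0\le p<\ell$) is the standard basis vector; period $T=\ell(n-1)$; for $0\le p<\ell$, $1\le s\le n-1$, $\pi_{(n-1)p+s-1}(\mathbf i)=\mathbf i+s\mathbf e_p$, and $\pi_t=\pi_{t\bmod T}$. The EBS semi-path from $(a,t)$ to $b$ is built greedily: at the current vertex $(x,t')$, stop if $x=b$; otherwise write $t'\bmod T=(n-1)p+s-1$ and, if $(b-x)_p=s$ in $\mathbb Z/n$, traverse the physical edge to $(x+s\mathbf e_p,t'+1)$, else the virtual edge to $(x,t'+1)$. *)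

(* Defs.v *)
From mathcomp Require Import all_boot all_order all_algebra.
Set Implicit Arguments. Unset Strict Implicit. Unset Printing Implicit Defensive.
Import GRing.Theory Num.Theory.
Local Open Scope ring_scope.

Section EBS.
Variables (l n : nat).

(* nodes (Z/n)^l ; 'Z_n is Z/nZ provided n >= 2 (hypothesis of the theorem) *)
Definition node := {ffun 'I_l -> 'Z_n}.

Definition ebasis (p : nat) : node := [ffun q : 'I_l => ((nat_of_ord q == p)%:R : 'Z_n)].

(* p-th coordinate of a vector (0 if p >= l, which never happens in use) *)
Definition coord (v : node) (p : nat) : 'Z_n := odflt 0 (omap v (insub p)).

Definition period : nat := (l * (n - 1))%N.

Definition phase (t : int) : nat := `|(t %% (period%:Z))%Z|%N.

(* writing t mod T = (n-1) p + s - 1 with 1 <= s <= n-1 *)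
Definition blk (t : int) : nat := (phase t %/ (n - 1))%N.
Definition sft (t : int) : nat := ((phase t %% (n - 1)).+1)%N.

Definition pi (t : int) (i : node) : node := i + ebasis (blk t) *+ sft t.

(* the greedy EBS semi-path towards b; a state is a vertex (x, t) *)
Definition goes_physical (b : node) (st : node * int) : bool :=
  (st.1 != b) && (coord (b - st.1) (blk st.2) == (sft st.2)%:R).

Definition ebs_step (b : node) (st : node * int) : node * int :=
  if st.1 == b then st
  else if goes_physical b st then (pi st.2 st.1, (st.2 + 1)%R)
  else (st.1, (st.2 + 1)%R).

(* the EBS semi-path from (a,t) to b traverses the physical edge
   (i,t0) -> (pi_{t0}(i), t0+1) *)
Definition traverses (t : int) (a b : node) (i : node) (t0 : int) : Prop :=
  exists k : nat, iter k (ebs_step b) (a, t) = (i, t0) /\ goes_physical b (i, t0).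

End EBS.

(* Main.v *)
Require Import Defs.
From mathcomp Require Import all_boot all_order all_algebra.
From mathcomp Require Import zify.
Set Implicit Arguments. Unset Strict Implicit. Unset Printing Implicit Defensive.
Import GRing.Theory Num.Theory.
Local Open Scope ring_scope.

Section S.
Variables (l n : nat) (hl : (1 <= l)%N) (hn : (2 <= n)%N).
Local Notation node := (node l n).
Local Notation T := (period l n).

Lemma T_gt0 : (0 < T)%N.
Proof. rewrite /period muln_gt0; apply/andP; split; lia. Qed.

Lemma phase_lt t : (phase l n t < T)%N.
Proof.
rewrite /phase.
have h0 : (0 <= (t %% T%:Z)%Z) by rewrite modz_ge0 // eqz_nat -lt0n T_gt0.
have h1 : ((t %% T%:Z)%Z < T%:Z) by rewrite ltz_pmod // ltz_nat T_gt0.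
lia.
Qed.

Lemma blk_lt t : (blk l n t < l)%N.
Proof.
rewrite /blk ltn_divLR; last lia.
have := phase_lt t; rewrite /period mulnC; done.
Qed.

Lemma sft_lt t : (sft l n t < n)%N.
Proof.
rewrite /sft; have := ltn_pmod (phase l n t) (_ : 0 < n - 1)%N; lia.
Qed.

Lemma sft_gt0 t : (0 < sft l n t)%N.
Proof. by []. Qed.

Lemma natZn_eq a b : (a < n)%N -> (b < n)%N -> ((a%:R : 'Z_n) == b%:R) = (a == b).
Proof.
move=> ha hb; apply/eqP/eqP => [|-> //].
move/(congr1 val) => /=; rewrite !Zp_nat /= Zp_cast // !modn_small //.
Qed.

Lemma natZn_neq0 a : (0 < a < n)%N -> (a%:R : 'Z_n) != 0.
Proof.
case/andP => h1 h2; change (a%:R != (0%N)%:R :> 'Z_n); rewrite natZn_eq //; lia.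
Qed.

Lemma coordE (v : node) (q : 'I_l) : Defs.coord v q = v q.
Proof. by rewrite /Defs.coord valK. Qed.


Lemma fD (f g : node) q : (f + g) q = f q + g q. Proof. by rewrite ffunE. Qed.
Lemma fN (f : node) q : (- f) q = - f q. Proof. by rewrite ffunE. Qed.
Lemma fMn (f : node) m q : (f *+ m) q = f q *+ m.
Proof. elim: m => [|m IH]; first by rewrite !mulr0n ffunE. by rewrite !mulrS fD IH. Qed.
Lemma ebE p q : ebasis l n p q = (nat_of_ord q == p)%:R. Proof. by rewrite ffunE. Qed.

Definition Yf (t : int) (k : nat) (d : node) : node :=
  [ffun q : 'I_l => if has (fun j : nat => (blk l n (t + j%:Z) == q) &&
       ((sft l n (t + j%:Z))%:R == d q)) (iota 0 k) then 0 else d q].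

Lemma Y0 t d : Yf t 0 d = d.
Proof. by apply/ffunP => q; rewrite ffunE. Qed.

Lemma YS t k d q : Yf t k.+1 d q =
  if (blk l n (t + k%:Z) == q) && (Yf t k d q == (sft l n (t + k%:Z))%:R)
  then 0 else Yf t k d q.
Proof.
have E : iota 0 k.+1 = iota 0 k ++ [:: k] by rewrite -addn1 iotaD.
rewrite !ffunE E.
rewrite has_cat /= orbF; case: has => /=; first by case: ifP.
by rewrite [d q == _]eq_sym.
Qed.

Lemma YS0 t k d : Yf t k.+1 d != 0 -> Yf t k d != 0.
Proof.
apply: contra => /eqP h; apply/eqP/ffunP => q; rewrite YS h ffunE.
by case: ifP.
Qed.

Lemma step t k d (b : node) : b - Yf t k d != b ->
  ebs_step b (b - Yf t k d, t + k%:Z) = (b - Yf t k.+1 d, t + k.+1%:Z).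
Proof.
move=> hx.
have E : b - (b - Yf t k d) = Yf t k d by rewrite opprB addrC subrK.
rewrite /ebs_step (negbTE hx) /goes_physical hx /= E.
have hP := blk_lt (t + k%:Z).
set P := Ordinal hP.
rewrite (_ : blk l n (t + k%:Z) = P) // coordE.
have Et : t + k%:Z + 1 = t + k.+1%:Z by rewrite -addrA intS [1 + _]addrC.
rewrite /Defs.pi Et.
have hY := YS t k d.
move: hY; set Y := Yf t k d; set Y' := Yf t k.+1 d => hY.
case: ifP => hc; congr pair; apply/ffunP => q; rewrite ?(fD, fN, fMn, ebE) hY;
  (case: (eqVneq q P) => [->|hq]; [rewrite eqxx /= hc /=|]).
- by rewrite (eqP hc) subr0 subrK.
- have -> : (blk l n (t + k%:Z) == q) = false by apply/negbTE; rewrite eq_sym.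
  have -> : (nat_of_ord q == blk l n (t + k%:Z)) = false by apply/negbTE.
  by rewrite /= mul0rn addr0.
- done.
- have -> : (blk l n (t + k%:Z) == q) = false by apply/negbTE; rewrite eq_sym.
  done.
Qed.


Lemma bY (b y : node) : (b - y != b) = (y != 0).
Proof. by rewrite -subr_eq0 addrAC subrr sub0r oppr_eq0. Qed.

Lemma iterA t a b k : (iter k (ebs_step b) (a, t)).1 != b ->
  iter k (ebs_step b) (a, t) = (b - Yf t k (b - a), t + k%:Z).
Proof.
elim: k => [|k IH] /=.
  by move=> _; rewrite Y0 opprB addrC subrK addr0.
case E: (iter k _ _) => [x t'] /= h.
have hx : x != b.
  by apply: contra h => /eqP ->; rewrite /ebs_step eqxx.
rewrite E /= in IH; case: (IH hx) => ex et; rewrite ex et; apply: step.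
by rewrite -ex.
Qed.

Lemma iterB t a b k : Yf t k (b - a) != 0 ->
  iter k (ebs_step b) (a, t) = (b - Yf t k (b - a), t + k%:Z).
Proof.
elim: k => [|k IH] h /=.
  by rewrite Y0 opprB addrC subrK addr0.
by rewrite IH ?(YS0 h) // step // bY (YS0 h).
Qed.

Lemma phase_eq u v : blk l n u = blk l n v -> sft l n u = sft l n v ->
  phase l n u = phase l n v.
Proof.
rewrite /blk /sft => h1 [h2].
by rewrite (divn_eq (phase l n u) (n - 1)) (divn_eq (phase l n v) (n - 1)) h1 h2.
Qed.

Lemma phaseT u : phase l n (u - T%:Z) = phase l n u.
Proof. by rewrite /phase -[in RHS](subrK T%:Z u) modzDr. Qed.

Lemma phase_ne u m : (0 < m < T)%N -> phase l n (u - m%:Z) != phase l n u.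
Proof.
move=> hm; apply/negP => /eqP h.
have hT : T%:Z != 0 by rewrite eqz_nat -lt0n T_gt0.
have h0 := modz_ge0 (u - m%:Z) hT.
have h1 := modz_ge0 u hT.
have : ((u - m%:Z) %% T%:Z == u %% T%:Z)%Z.
  apply/eqP; move: h; rewrite /phase; lia.
rewrite eqz_mod_dvd addrAC subrr sub0r dvdzE abszN /= gtnNdvd //; by case/andP: hm.
Qed.

Lemma nohas t0 k j : (k < T)%N -> (j < k)%N ->
  ~~ ((blk l n (t0 - k%:Z + j%:Z) == blk l n t0) &&
      ((sft l n (t0 - k%:Z + j%:Z))%:R == (sft l n t0)%:R :> 'Z_n)).
Proof.
move=> hk hj; apply/negP => /andP [/eqP h1].
rewrite natZn_eq ?sft_lt // => /eqP h2.
have E : t0 - k%:Z + j%:Z = t0 - (k - j)%N%:Z by lia.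
rewrite E in h1 h2.
have hm : (0 < k - j < T)%N by apply/andP; split; lia.
by have := phase_ne t0 hm; rewrite (phase_eq h1 h2) eqxx.
Qed.

Lemma card_fix (P0 : 'I_l) (c : 'Z_n) : #|[pred d : node | d P0 == c]| = (n ^ (l - 1))%N.
Proof.
pose F := fun x : 'I_l => if x == P0 then pred1 c else [pred z : 'Z_n | true].
rewrite (eq_card (B := family F)); last first.
  move=> d; rewrite inE; apply/eqP/familyP => [h x|h].
    by rewrite /F; case: eqP => [->|]; rewrite inE ?h.
  by have := h P0; rewrite /F eqxx inE => /eqP.
rewrite card_family foldrE big_image (bigD1 P0) //= {1}/F eqxx card1 mul1n.
rewrite (eq_bigr (fun _ => n)); last first.
  move=> x hx; rewrite /F (negbTE hx) cardT size_enum_ord Zp_cast //.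
by rewrite prod_nat_const cardC1 card_ord subn1.
Qed.


Lemma main_sec (i : node) (t0 : int) :
  exists s : seq (int * node * node),
    uniq s /\
    (forall x : int * node * node,
        x \in s <-> traverses x.1.1 x.1.2 x.2 i t0) /\
    size s = (T * n ^ (l - 1))%N.
Proof.
have hP := blk_lt t0.
set P0 := Ordinal hP.
set s0 := sft l n t0.
have s0nz : (s0%:R : 'Z_n) != 0 by apply: natZn_neq0; rewrite sft_gt0 sft_lt.
pose D := [pred d : node | d P0 == s0%:R].
pose f := fun (k : nat) (d : node) =>
  (t0 - k%:Z, i + Yf (t0 - k%:Z) k d - d, i + Yf (t0 - k%:Z) k d).
exists [seq f k d | k <- iota 0 T, d <- enum D].
split; [|split].
- apply: allpairs_uniq; [exact: iota_uniq | exact: enum_uniq |].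
  move=> [k d] [k' d'] _ _ /= [e1 e2 e3].
  have ek : k = k' by lia.
  subst k'; rewrite e3 in e2.
  by move/addrI/oppr_inj: e2 => ->.
- move=> [[t a] b] /=; split.
  + move/allpairsP => [[k d] [/= hk hd E]].
    rewrite /f in E; case: E => -> -> ->.
    rewrite mem_iota add0n in hk; rewrite mem_enum inE in hd.
    set Y := Yf (t0 - k%:Z) k d.
    have hba : i + Y - (i + Y - d) = d by rewrite opprB addrC subrK.
    have YP : Y P0 = s0%:R.
      rewrite /Y /Yf ffunE; case: hasP => [[j hj]|_]; last exact/eqP.
      rewrite mem_iota add0n in hj.
      by rewrite (eqP hd) (negbTE (nohas _ _ _)).
    have Ynz : Y != 0.
      by apply/eqP => h; move: YP; rewrite h ffunE => /eqP; rewrite eq_sym (negbTE s0nz).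
    exists k; rewrite iterB hba //; split.
      by congr pair; rewrite ?addrK ?subrK.
    rewrite /goes_physical /=.
    have -> : i + Y - i = Y by rewrite addrC addKr.
    rewrite -subr_eq0 opprD addrA subrr sub0r oppr_eq0 Ynz /=.
    by rewrite (_ : blk l n t0 = P0) // coordE YP.
  + move=> [k [hit hg]].
    have hb : (iter k (ebs_step b) (a,t)).1 != b by rewrite hit; case/andP: hg.
    have := iterA hb; rewrite hit => -[ei et].
    move: ei; set d := b - a; set Y := Yf t k d => ei.
    have hbi : b - i = Y by rewrite ei opprB addrC subrK.
    move: hg; rewrite /goes_physical /= hbi (_ : blk l n t0 = P0) // coordE => /andP [_ /eqP YP].
    have et' : t = t0 - k%:Z by rewrite et addrK.
    move: YP; rewrite /Y /Yf ffunE; case: ifP => Hh YP.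
      by move: s0nz; rewrite -YP eqxx.
    have hk : (k < T)%N.
      rewrite ltnNge; apply/negP => hk.
      move/negP: Hh; apply; apply/hasP; exists (k - T)%N.
        rewrite mem_iota add0n; have := T_gt0; lia.
      have E : t + (k - T)%N%:Z = t0 - T%:Z by rewrite et'; lia.
      rewrite E /blk /sft phaseT /= YP.
      by apply/andP; split; apply/eqP.
    have -> : (t, a, b) = f k d.
      rewrite /f -et'.
      have e4 : i + Yf t k d = b by rewrite ei /Y subrK.
      rewrite e4; congr pair; congr pair.
      by rewrite /d opprB addrC subrK.
    by apply: allpairs_f; rewrite ?mem_iota ?add0n ?mem_enum ?inE ?YP.
- by rewrite size_allpairs size_iota -cardE card_fix.
Qed.

End S.

Theorem mainTheorem5 (l n : nat) (hl : (1 <= l)%N) (hn : (2 <= n)%N)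
    (i : node l n) (t0 : int) :
  exists s : seq (int * node l n * node l n),
    uniq s /\
    (forall x : int * node l n * node l n,
        x \in s <-> traverses x.1.1 x.1.2 x.2 i t0) /\
    size s = (period l n * n ^ (l - 1))%N.
Proof. exact: main_sec. Qed.
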